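(* Let $E=[n]$, let $f:2^E\to\mathbb{R}_{\ge0}$ be a submodular function with Lovász extension $F$, and let $d\in\mathbb{R}^n$ be a nonzero direction. Then \[ \max\{\lambda:\ \lambda d\in P(f)\}=\min\{F(x):\ x\in\mathbb{R}^n_{\ge 0},\ d^\top x=1\}. \]
   Context: For $x\in\mathbb{R}^n$ and $S\subseteq E$ write $x(S)=\sum_{i\in S}x_i$. The extended polymatroid is $P(f)=\{x\in\mathbb{R}^n: x(S)\le f(S)\ \forall S\subseteq E\}$ and the base polytope is $B(f)=\{x\in P(f): x(E)=f(E)\}$. The Lovász extension is $F(x)=\max_{v\in B(f)}v^\top x$; equivalently $F(x)=\sum_{i=1}^n x_{\pi_i}(f(S_i)-f(S_{i-1}))$ where $x_{\pi_1}\ge\cdots\ge x_{\pi_n}$ (ties broken lexicographically), $S_i=\{\pi_1,\dots,\pi_i\}$, $S_0=\emptyset$. *)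

(* Defs.v *)
From mathcomp Require Import all_boot all_order all_algebra.
Set Implicit Arguments. Unset Strict Implicit. Unset Printing Implicit Defensive.
Import Order.TTheory GRing.Theory Num.Theory.
Local Open Scope ring_scope.

Section Defs.
Variables (R : realFieldType) (n : nat).

Definition xsum (x : 'I_n -> R) (S : {set 'I_n}) : R := \sum_(i in S) x i.

Definition submodular (f : {set 'I_n} -> R) : Prop :=
  forall A B : {set 'I_n}, f (A :|: B) + f (A :&: B) <= f A + f B.

Definition in_polymatroid (f : {set 'I_n} -> R) (x : 'I_n -> R) : Prop :=
  forall S : {set 'I_n}, xsum x S <= f S.

Definition lovasz_rel (x : 'I_n -> R) : rel 'I_n :=
  fun i j => (x j < x i) || ((x i == x j) && (i <= j)%N).

Definition lovasz_order (x : 'I_n -> R) : seq 'I_n :=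
  sort (lovasz_rel x) (enum 'I_n).

(* Lovász extension: F(x) = sum_i x_{pi_i} (f(S_i) - f(S_{i-1})),
   S_i = {pi_1,...,pi_i}. *)
Definition lovasz (f : {set 'I_n} -> R) (x : 'I_n -> R) : R :=
  let s := lovasz_order x in
  \sum_(i <- s)
     x i * (f [set j in take (index i s).+1 s] - f [set j in take (index i s) s]).

Definition dot (d x : 'I_n -> R) : R := \sum_i d i * x i.

End Defs.

(* Main.v *)
Require Import Defs.
From mathcomp Require Import all_boot all_order all_algebra.
From mathcomp Require Import ring lra.
Import Order.TTheory GRing.Theory Num.Theory.
Local Open Scope ring_scope.
Section Aux.
Variable R : realFieldType.

Lemma abel (a h : nat -> R) m :
  \sum_(0 <= k < m) (a k - a k.+1) * h k.+1 =
  \sum_(0 <= k < m) a k * (h k.+1 - h k) - a m * h m + a 0%N * h 0%N.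
Proof.
elim: m => [|m IH]; first by rewrite !big_geq //; ring.
rewrite !big_nat_recr //= IH; ring.
Qed.

Lemma mono_nat (A : nat -> R) : (forall k, A k.+1 <= A k) ->
  forall i j, (i <= j)%N -> A j <= A i.
Proof.
move=> H i j /subnK <-; elim: (j - i)%N => [|k IH]; first by rewrite add0n.
by rewrite addSn; apply: le_trans (H _) IH.
Qed.

Variable n : nat.

Lemma lrel_total (x : 'I_n -> R) : total (lovasz_rel x).
Proof.
move=> i j; rewrite /lovasz_rel.
case: (ltgtP (x j) (x i)) => //= E; rewrite ?E ?eqxx /= ?leq_total //.
Qed.

Lemma lrel_le (x : 'I_n -> R) i j : lovasz_rel x i j -> x j <= x i.
Proof. by case/orP => [/ltW //| /andP [/eqP -> _]]. Qed.

End Aux.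
Section L.
Variables (R : realFieldType) (n : nat) (x : 'I_n -> R) (i0 : 'I_n).
Let s := lovasz_order x.
Definition AA k := if (k < size s)%N then x (nth i0 s k) else 0.
Definition TT k := [set j in take k s].

Lemma s_uniq : uniq s.
Proof. by rewrite /s /lovasz_order sort_uniq enum_uniq. Qed.

Lemma s_size : size s = n.
Proof. by rewrite /s /lovasz_order size_sort size_enum_ord. Qed.

Lemma s_mem j : j \in s.
Proof. by rewrite /s /lovasz_order mem_sort mem_enum. Qed.

Lemma lovasz_nat (g : {set 'I_n} -> R) :
  lovasz g x = \sum_(0 <= k < size s) AA k * (g (TT k.+1) - g (TT k)).
Proof.
rewrite /lovasz -/s (big_nth i0); apply: eq_big_nat => k /andP [_ Hk].
by rewrite /AA Hk /TT index_uniq // s_uniq.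
Qed.

Lemma lovasz_abel (g : {set 'I_n} -> R) : g set0 = 0 ->
  lovasz g x = \sum_(0 <= k < size s) (AA k - AA k.+1) * g (TT k.+1).
Proof.
move=> g0; rewrite (@abel _ AA (fun k => g (TT k))) lovasz_nat.
have -> : TT 0 = set0 by apply/setP => j; rewrite /TT take0 !inE.
by rewrite /AA ltnn g0; ring.
Qed.

Lemma AA_mono : (forall i, 0 <= x i) -> forall k, AA k.+1 <= AA k.
Proof.
move=> x0 k; rewrite /AA; case: ifP => H1; last by case: ifP.
rewrite (ltnW H1).
have /sortedP := sort_sorted (@lrel_total _ _ x) (enum 'I_n).
by move=> /(_ i0 k H1) /(@lrel_le R).
Qed.

Lemma AA_ge0 : (forall i, 0 <= x i) -> forall k, 0 <= AA k.
Proof. by move=> x0 k; rewrite /AA; case: ifP. Qed.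

Lemma AA_index j : AA (index j s) = x j.
Proof. by rewrite /AA index_mem s_mem nth_index // s_mem. Qed.

Lemma TT_in j k : (j \in TT k) = (index j s < k)%N.
Proof. by rewrite /TT inE in_take // s_mem. Qed.

Lemma lovasz_mod (d : 'I_n -> R) : lovasz (xsum d) x = dot d x.
Proof.
rewrite /lovasz -/s /dot.
transitivity (\sum_(i <- s) x i * d i).
  apply: eq_bigr => i _.
  rewrite (take_nth i0); last by rewrite index_mem s_mem.
  rewrite nth_index ?s_mem //.
  have -> : [set j in rcons (take (index i s) s) i] = i |: [set j in take (index i s) s].
    by apply/setP => j; rewrite !inE mem_rcons in_cons.
  rewrite /xsum big_setU1 /=; last by rewrite inE in_take ?s_mem // ltnn.
  by rewrite addrK.
rewrite /s /lovasz_order (perm_big _ (permEl (perm_sort _ _))) /= big_enum.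
by apply: eq_bigr => i _; rewrite mulrC.
Qed.

End L.
Lemma lower (R : realFieldType) (n : nat) (f : {set 'I_n} -> R) (d : 'I_n -> R)
  (lam : R) (i0 : 'I_n) (f0 : f set0 = 0)
  (H : forall S, lam * xsum d S <= f S) (y : 'I_n -> R) (y0 : forall i, 0 <= y i) :
  lam * dot d y <= lovasz f y.
Proof.
rewrite -(@lovasz_mod _ _ y i0 d) (@lovasz_abel _ _ y i0 f f0) (@lovasz_abel _ _ y i0 (xsum d)); last first.
  by rewrite /xsum big_set0.
rewrite mulr_sumr; apply: ler_sum => k _.
rewrite mulrCA; apply: ler_wpM2l; last exact: H.
by rewrite subr_ge0 (@AA_mono _ _ y i0 y0).
Qed.

Theorem theorem1 (R : realFieldType) (n : nat) (f : {set 'I_n} -> R)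
    (d : 'I_n -> R)
    (f_ge0 : forall S, 0 <= f S)
    (f0 : f set0 = 0)
    (f_sub : submodular f)
    (d_nz : ~ (forall i, d i = 0)) :
  (exists (lam : R) (x : 'I_n -> R),
      [/\ in_polymatroid f (fun i => lam * d i),
          (forall mu : R, in_polymatroid f (fun i => mu * d i) -> mu <= lam),
          (forall i, 0 <= x i) /\ dot d x = 1,
          (forall y : 'I_n -> R, (forall i, 0 <= y i) -> dot d y = 1 ->
              lovasz f x <= lovasz f y)
        & lam = lovasz f x])
  \/
  ((forall M : R, exists mu : R, M < mu /\ in_polymatroid f (fun i => mu * d i))
   /\ ~ (exists y : 'I_n -> R, (forall i, 0 <= y i) /\ dot d y = 1)).
Proof.
case: (boolP [exists i, 0 < d i]) => [/existsP [i0 di0] | /existsPn Hno]; last first.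
  have dle : forall i, d i <= 0 by move=> i; rewrite leNgt Hno.
  right; split.
    move=> M; exists (`|M| + 1); split; first by have := ler_norm M; lra.
    move=> T; apply: le_trans (f_ge0 T); rewrite /xsum; apply: sumr_le0 => i _.
    by apply: mulr_ge0_le0 => //; rewrite addr_ge0.
  case=> y [y0 dy]; have : dot d y <= 0.
    by rewrite /dot; apply: sumr_le0 => i _; apply: mulr_le0_ge0.
  by rewrite dy; lra.
pose P := fun S : {set 'I_n} => 0 < xsum d S.
have P0 : P [set i0] by rewrite /P /xsum big_set1.
case: (@arg_minP _ _ _ _ P (fun S => f S / xsum d S) P0) => S PS Smin.
rewrite /P in PS.
set D := xsum d S in PS *.
set lam := f S / D.
set c := D^-1.
have cpos : 0 < c by rewrite invr_gt0.
have lam0 : 0 <= lam by rewrite divr_ge0 // ltW.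
have Hpoly : forall T, lam * xsum d T <= f T.
  move=> T; case: (ltrP 0 (xsum d T)) => HT.
    by rewrite -ler_pdivlMr //; apply: Smin.
  by apply: le_trans (f_ge0 T); apply: mulr_ge0_le0.
pose xs := fun i => if i \in S then c else 0.
have xs0 : forall i, 0 <= xs i by move=> i; rewrite /xs; case: ifP => // _; apply: ltW.
have Fxs : lovasz f xs = lam.
  rewrite (@lovasz_abel _ _ xs i0 f f0).
  set A := @AA _ _ xs i0.
  have Aval : forall k, A k = c \/ A k = 0.
    by move=> k; rewrite /A /AA /xs; case: ifP => _; [case: ifP => _|]; auto.
  have Amono := @mono_nat _ A (@AA_mono _ _ xs i0 xs0).
  have Aidx : forall j, A (index j (lovasz_order xs)) = xs j by move=> j; apply: AA_index.
  transitivity (\sum_(0 <= k < size (lovasz_order xs)) (A k - A k.+1) * f S).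
    apply: eq_big_nat => k _.
    case: (A k =P A k.+1) => [->|neq]; first by rewrite subrr !mul0r.
    have Ak1 : A k.+1 <= A k by apply: Amono.
    have [Akc Ak10] : A k = c /\ A k.+1 = 0.
      case: (Aval k) => E1; case: (Aval k.+1) => E2; rewrite E1 E2 in neq Ak1 *;
        by [split | case: neq | lra].
    congr (_ * f _); apply/setP => j; rewrite TT_in.
    case: (boolP (j \in S)) => jS.
      rewrite ltnNge; apply/negP => Hle; have := Amono _ _ Hle.
      by rewrite Aidx /xs jS Ak10; lra.
    apply/negbTE; rewrite ltnS; apply/negP => Hle; have := Amono _ _ Hle.
    by rewrite Aidx /xs (negbTE jS) Akc; lra.
  rewrite -mulr_suml.
  have -> : \sum_(0 <= k < size (lovasz_order xs)) (A k - A k.+1) =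
            - (A (size (lovasz_order xs)) - A 0%N).
    by rewrite -telescope_sumr // -sumrN; apply: eq_bigr => k _; rewrite opprB.
  have -> : A (size (lovasz_order xs)) = 0 by rewrite /A /AA ltnn.
  have -> : A 0%N = c.
    have : S != set0.
      by apply/negP => /eqP S0; move: PS; rewrite /D S0 /xsum big_set0 ltxx.
    case/set0Pn => j jS.
    have H := Amono 0%N (index j (lovasz_order xs)) (leq0n _).
    rewrite Aidx /xs jS in H; case: (Aval 0%N) => E //; rewrite E in H; lra.
  by rewrite /lam /c sub0r opprK mulrC.
left; exists lam, xs; split => //.
- by move=> T; rewrite /xsum -mulr_sumr; apply: Hpoly.
- move=> mu Hmu; have := Hmu S; rewrite /xsum -mulr_sumr -/(xsum d S) -/D.
  by rewrite /lam ler_pdivlMr.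
- split => //; rewrite /dot.
  transitivity (\sum_(i in S) d i * c).
    rewrite [RHS]big_mkcond /=; apply: eq_bigr => i _; rewrite /xs.
    by case: ifP => _ //; rewrite mulr0.
  by rewrite -mulr_suml -/(xsum d S) -/D /c mulfV // gt_eqF.
- move=> y y0 dy; rewrite Fxs; have := @lower _ _ f d lam i0 f0 Hpoly y y0.
  by rewrite dy mulr1.
Qed.
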